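(* Let $v\in S$ be a point with at least one irrational coordinate whose itinerary $\mathbb{X}_{a_1},\mathbb{X}_{a_2},\dots$ satisfies: $\mathbb{X}_{a_k}$ is of type $\mathbb{A}$ for all $k\ge m$, for some $m\ge1$. Then $G^{m-1}(v)$ lies on the edge $\{(x,0,0):0\le x\le1\}$ of $S$.
   Context: Let $S = \{(x,y,z)\in\mathbb{R}^3 : 0\le z\le y\le x\le 1\}$. For integers $n\ge1$ define $\mathbb{A}_n = \{\frac1{n+1} < x \le \frac1n,\ 0\le z\le y\le 1-nx\}$, $\mathbb{B}_n = \{0\le z\le 1-nx < y \le x\}$, $\mathbb{C}_n = \{1-nx < z \le y \le x \le \frac1n\}$; together with $\{(0,0,0)\}$ they partition $S$. The 3-dimensional Gauss map $G:S\to S$ is $G(0,0,0)=(0,0,0)$, $G(x,y,z)=\left(\frac1x-n,\frac yx,\frac zx\right)$ on $\mathbb{A}_n$, $G(x,y,z)=\left(\frac{1-y}{x}-n+1,\frac{x-y+z}{x},\frac{x-y}{x}\right)$ on $\mathbb{B}_n$, $G(x,y,z)=\left(\frac{1-z}{x}-n+1,\frac{x-z}{x},\frac{y-z}{x}\right)$ on $\mathbb{C}_n$. For a point $v$ whose forward orbit never hits the origin, its itinerary is the sequence $\mathbb{X}_{a_1},\mathbb{X}_{a_2},\dots$ ($\mathbb{X}\in\{\mathbb{A},\mathbb{B},\mathbb{C}\}$) with $G^{k-1}(v)\in\mathbb{X}_{a_k}$. *)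

(* Defs.v *)
From Stdlib Require Import Reals Lra QArith Qreals.
Open Scope R_scope.

Definition point : Type := (R * R * R)%type.

Definition inS (p : point) : Prop :=
  let '(x, y, z) := p in 0 <= z /\ z <= y /\ y <= x /\ x <= 1.

Definition inA (n : nat) (p : point) : Prop :=
  let '(x, y, z) := p in
  (1 <= n)%nat /\ 1 / (INR n + 1) < x /\ x <= 1 / INR n /\
  0 <= z /\ z <= y /\ y <= 1 - INR n * x.

Definition inB (n : nat) (p : point) : Prop :=
  let '(x, y, z) := p in
  (1 <= n)%nat /\ 0 <= z /\ z <= 1 - INR n * x /\ 1 - INR n * x < y /\ y <= x.

Definition inC (n : nat) (p : point) : Prop :=
  let '(x, y, z) := p in
  (1 <= n)%nat /\ 1 - INR n * x < z /\ z <= y /\ y <= x /\ x <= 1 / INR n.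

Definition origin : point := (0, 0, 0).

(* For (x,y,z) in S \ {0}: the index n of A_n and C_n is floor(1/x)
   (= up(1/x) - 1), and the index of B_m is the unique m with
   1 - m x < y, i.e. m = up((1-y)/x).  Point (x,y,z) is in A_n iff
   y <= 1 - n x; otherwise it is in B_m iff z <= 1 - m x; otherwise in C_n. *)
Definition G (p : point) : point :=
  let '(x, y, z) := p in
  if Req_EM_T x 0 then origin else
  let n := IZR (up (1 / x) - 1) in
  if Rle_dec y (1 - n * x) then (1 / x - n, y / x, z / x) else
  let m := IZR (up ((1 - y) / x)) in
  if Rle_dec z (1 - m * x) then ((1 - y) / x - m + 1, (x - y + z) / x, (x - y) / x)
  else ((1 - z) / x - n + 1, (x - z) / x, (y - z) / x).

Definition irrational (r : R) : Prop := ~ exists q : Q, Q2R q = r.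

Definition has_irrational_coord (p : point) : Prop :=
  let '(x, y, z) := p in irrational x \/ irrational y \/ irrational z.

(* Main.v *)
Require Import Defs.
From Stdlib Require Import Reals Lra QArith Qreals Lia ZArith.
Open Scope R_scope.

Lemma G_on_A (n : nat) (x y z : R) : inA n (x, y, z) ->
  G (x, y, z) = (1 / x - INR n, y / x, z / x).
Proof.
  simpl. intros [Hn [H1 [H2 [H3 [H4 H5]]]]].
  assert (Hn1 : 1 <= INR n) by (apply (le_INR 1); exact Hn).
  assert (Hxp : 0 < x) by (apply Rlt_trans with (1 / (INR n + 1)); [apply Rdiv_lt_0_compat; lra| exact H1]).
  assert (Ha : INR n <= 1 / x).
  { apply (Rmult_le_reg_r x); [lra|]. unfold Rdiv. rewrite Rmult_assoc, Rinv_l by lra.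
    assert (INR n * x <= INR n * (1 / INR n)) by (apply Rmult_le_compat_l; lra).
    replace (INR n * (1 / INR n)) with 1 in H by (field; lra). lra. }
  assert (Hb : 1 / x < INR n + 1).
  { apply (Rmult_lt_reg_r x); [lra|]. unfold Rdiv. rewrite Rmult_assoc, Rinv_l by lra.
    assert ((INR n + 1) * (1 / (INR n + 1)) < (INR n + 1) * x) by (apply Rmult_lt_compat_l; lra).
    replace ((INR n + 1) * (1 / (INR n + 1))) with 1 in H by (field; lra). lra. }
  assert (Hu : IZR (up (1 / x) - 1) = INR n).
  { rewrite INR_IZR_INZ in *. rewrite <- (up_tech (1 / x) (Z.of_nat n)); auto.
    - f_equal. ring.
    - rewrite plus_IZR. simpl. lra. }
  destruct (Req_EM_T x 0) as [e|_]; [lra|].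
  rewrite Hu. destruct (Rle_dec y (1 - INR n * x)) as [_|c]; [reflexivity|lra].
Qed.

Lemma pow2_ge (k : nat) : INR k + 1 <= 2 ^ k.
Proof.
  induction k; [simpl; lra|]. rewrite S_INR. simpl.
  assert (1 <= 2 ^ k) by (clear IHk; induction k; simpl; lra). lra.
Qed.

Theorem mainTheorem15 (v : point) (m : nat) :
  inS v ->
  has_irrational_coord v ->
  (forall k : nat, Nat.iter k G v <> origin) ->
  (1 <= m)%nat ->
  (forall k : nat, (m <= k)%nat -> exists n : nat, inA n (Nat.iter (k - 1) G v)) ->
  exists x : R, Nat.iter (m - 1) G v = (x, 0, 0) /\ 0 <= x /\ x <= 1.
Proof.
  intros _ _ _ Hm HA.
  set (p := fun k => Nat.iter (m - 1 + k) G v).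
  assert (HpA : forall k, exists n, inA n (p k)).
  { intro k. destruct (HA (m + k)%nat) as [n Hn]; [lia|]. exists n. unfold p.
    replace (m - 1 + k)%nat with (m + k - 1)%nat by lia. exact Hn. }
  assert (HpS : forall k, p (S k) = G (p k)).
  { intro k. unfold p. replace (m - 1 + S k)%nat with (S (m - 1 + k)) by lia. reflexivity. }
  set (yy := fun k => snd (fst (p k))).
  assert (Hy1 : forall k, 0 <= yy k <= 1).
  { intro k. unfold yy. destruct (HpA k) as [n Hn]. destruct (p k) as [[x y] z].
    simpl in *. destruct Hn as [Hn [H1 [H2 [H3 [H4 H5]]]]].
    assert (1 <= INR n) by (apply (le_INR 1); exact Hn).
    assert (0 < 1 / (INR n + 1)) by (apply Rdiv_lt_0_compat; lra). nra. }
  assert (Hgrow : forall k, yy 0%nat * 2 ^ k <= yy (2 * k)%nat).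
  { induction k. simpl. lra.
    replace (2 * S k)%nat with (S (S (2 * k))) by lia.
    assert (yy (2 * k)%nat * 2 <= yy (S (S (2 * k)))).
    { unfold yy. rewrite !HpS.
      destruct (HpA (2 * k)%nat) as [n Hn].
      destruct (HpA (S (2 * k))) as [n' Hn']. rewrite HpS in Hn'.
      destruct (p (2 * k)%nat) as [[x y] z].
      rewrite (G_on_A n x y z Hn) in *. rewrite (G_on_A n' _ _ _ Hn'). simpl.
      destruct Hn as [Hn [H1 [H2 [H3 [H4 H5]]]]].
      destruct Hn' as [Hn' [H1' _]].
      assert (1 <= INR n) by (apply (le_INR 1); exact Hn).
      assert (1 <= INR n') by (apply (le_INR 1); exact Hn').
      assert (0 < 1 / (INR n' + 1)) by (apply Rdiv_lt_0_compat; lra).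
      assert (0 < 1 / (INR n + 1)) by (apply Rdiv_lt_0_compat; lra).
      assert (Hx : 0 < x) by lra.
      set (x' := 1 / x - INR n) in *.
      assert (Hxx : x * x' = 1 - INR n * x) by (unfold x'; field; lra).
      assert (Hlt : x * x' < 1 / 2).
      { rewrite Hxx. unfold Rdiv in H1.
        assert (INR n * / (INR n + 1) >= 1/2).
        { apply Rle_ge. replace (INR n * / (INR n + 1)) with (1 - 1 / (INR n + 1)) by (field; lra).
          assert (1 / (INR n + 1) <= 1 / 2) by (apply Rmult_le_compat_l; [lra| apply Rinv_le_contravar; lra]).
          lra. }
        assert (INR n * x > INR n * / (INR n + 1)) by (apply Rmult_lt_compat_l; lra). lra. }
      assert (0 < x') by lra.
      replace (y / x / x') with (y / (x * x')) by (field; lra).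
      assert (0 < x * x') by nra.
      assert (/ (1/2) < / (x * x')) by (apply Rinv_lt_contravar; nra).
      replace (/ (1/2)) with 2 in H10 by field.
      unfold Rdiv. nra. }
    simpl pow. specialize (Hy1 0%nat). nra. }
  assert (Hy0 : yy 0%nat = 0).
  { destruct (Hy1 0%nat) as [Hge _]. destruct (Rle_lt_or_eq_dec _ _ Hge) as [Hp|]; [|lra].
    exfalso. destruct (archimed (/ yy 0%nat)) as [Ha _].
    assert (Hk : 0 <= IZR (up (/ yy 0%nat))).
    { assert (0 < / yy 0%nat) by (apply Rinv_0_lt_compat; lra). lra. }
    set (k := Z.to_nat (up (/ yy 0%nat))).
    assert (Hk' : IZR (up (/ yy 0%nat)) = INR k).
    { unfold k. rewrite INR_IZR_INZ, Z2Nat.id; [reflexivity|]. apply le_IZR. exact Hk. }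
    rewrite Hk' in Ha.
    specialize (Hgrow k). specialize (Hy1 (2 * k)%nat). pose proof (pow2_ge k).
    assert (yy 0%nat * INR k > 1).
    { assert (yy 0%nat * / yy 0%nat < yy 0%nat * INR k) by (apply Rmult_lt_compat_l; lra).
      rewrite Rinv_r in H0 by lra. lra. }
    nra. }
  destruct (HpA 0%nat) as [n Hn]. unfold yy in Hy0.
  unfold p in Hn, Hy0. rewrite Nat.add_0_r in Hn, Hy0.
  destruct (Nat.iter (m - 1) G v) as [[x y] z]. simpl in Hy0, Hn. subst y.
  destruct Hn as [Hn [H1 [H2 [H3 [H4 H5]]]]].
  assert (1 <= INR n) by (apply (le_INR 1); exact Hn).
  assert (0 < 1 / (INR n + 1)) by (apply Rdiv_lt_0_compat; lra).
  exists x. repeat split; try lra.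
  - f_equal. lra.
  - assert (1 / INR n <= 1). { unfold Rdiv. rewrite Rmult_1_l. rewrite <- Rinv_1. apply Rinv_le_contravar; lra. }
    lra.
Qed.
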